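(* Consider any instance of the rescheduling problem $(1, h_1 \mid \Delta_{\max}\le k \mid \mu\Delta_{\max} + \sum_{j=1}^n w_j C_j)$ described in the context, and suppose it admits at least one feasible schedule. Then there exists an optimal schedule $\sigma^*$ such that (a) the jobs in the earlier schedule of $\sigma^*$ are processed in increasing order of their indices (i.e., in the same order as in $\pi^*$); and (b) the jobs in the later schedule of $\sigma^*$ are also processed in increasing order of their indices.
   Context: An instance consists of $n$ jobs $J_1,\dots,J_n$, where $J_j$ has a positive integer processing time $p_j$ and a positive integer weight $w_j$, indexed in WSPT order $p_1/w_1\le p_2/w_2\le\cdots\le p_n/w_n$; integers $T_1,T_2$ with $0\le T_1<T_2$ (the machine is unavailable during $[T_1,T_2]$); an integer $k$; and a rational $\mu\ge 0$. The original schedule $\pi^*$ processes $J_1,\dots,J_n$ in this order consecutively from time $0$ without idle time, so $S_j(\pi^* )=\sum_{i<j}p_i$ and $C_j(\pi^* )=\sum_{i\le j}p_i$. A schedule $\sigma$ assigns each job a start time $S_j(\sigma)\ge 0$; jobs are processed non-preemptively on a single machine, $C_j(\sigma)=S_j(\sigma)+p_j$, no two jobs overlap in time, and no job is processed inside the unavailability interval (each job has $C_j(\sigma)\le T_1$ or $S_j(\sigma)\ge T_2$). Let $\Delta_j=|C_j(\sigma)-C_j(\pi^* )|$ and $\Delta_{\max}=\max_j\Delta_j$. A schedule is feasible if $\Delta_{\max}\le k$; an optimal schedule is a feasible schedule minimizing $\mu\Delta_{\max}+\sum_{j=1}^n w_jC_j(\sigma)$. The earlier schedule of $\sigma$ consists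 of the jobs with $C_j(\sigma)\le T_1$; the later schedule consists of the jobs completed after $T_2$. Standing assumptions: some job has $C_j(\pi^* )>T_1$; letting $j_1$ be the smallest such index, $p_{\min}\le T_1<P$ and $T_2-S_{j_1}(\pi^* )\le k$, where $p_{\min}=\min_j p_j$ and $P=\sum_j p_j$. *)

(* Defs.v *)
From mathcomp Require Import all_boot all_order all_algebra.
Set Implicit Arguments. Unset Strict Implicit. Unset Printing Implicit Defensive.
Import Order.TTheory GRing.Theory Num.Theory.
Local Open Scope ring_scope.

Section Resched.
Variables (n : nat) (p w : 'I_n -> nat) (T1 T2 k : nat) (mu : rat).

(* original schedule pi*: jobs in index order from time 0 *)
Definition S_orig (j : 'I_n) : nat := \sum_(i < n | (i < j)%N) p i.
Definition C_orig (j : 'I_n) : nat := \sum_(i < n | (i <= j)%N) p i.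
Definition Ptot : nat := \sum_(i < n) p i.
(* minimum processing time; seed Ptot is harmless since n > 0 is forced by T1 < Ptot *)
Definition pmin : nat := \big[minn/Ptot]_(i < n) p i.

Definition Cmp (S : 'I_n -> rat) (j : 'I_n) : rat := S j + (p j)%:R.
Definition Delta (S : 'I_n -> rat) (j : 'I_n) : rat := `|Cmp S j - (C_orig j)%:R|.
Definition Dmax (S : 'I_n -> rat) : rat := \big[Num.max/0]_(j < n) Delta S j.

Definition valid_schedule (S : 'I_n -> rat) : Prop :=
  (forall j, 0 <= S j) /\
  (forall i j, i != j -> Cmp S i <= S j \/ Cmp S j <= S i) /\
  (* avoid unavailability interval [T1,T2] *)
  (forall j, Cmp S j <= T1%:R \/ T2%:R <= S j).

Definition feasible (S : 'I_n -> rat) : Prop :=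
  valid_schedule S /\ Dmax S <= k%:R.

Definition cost (S : 'I_n -> rat) : rat :=
  mu * Dmax S + \sum_(j < n) (w j)%:R * Cmp S j.

Definition optimal (S : 'I_n -> rat) : Prop :=
  feasible S /\ forall S', feasible S' -> cost S <= cost S'.

Definition in_earlier (S : 'I_n -> rat) (j : 'I_n) : Prop := Cmp S j <= T1%:R.
Definition in_later (S : 'I_n -> rat) (j : 'I_n) : Prop := T2%:R < Cmp S j.

Definition index_ordered (P : 'I_n -> Prop) (S : 'I_n -> rat) : Prop :=
  forall i j, P i -> P j -> (i < j)%N -> S i < S j.

End Resched.

(* Main.v *)
Require Import Defs.
From mathcomp Require Import all_boot all_order all_algebra.
From mathcomp Require Import zify.
From mathcomp.algebra_tactics Require Import ring lra.
From Stdlib Require Import Classical.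
Import Order.TTheory GRing.Theory Num.Theory.
Local Open Scope ring_scope.

Section Proof.
Variables (n : nat) (p w : 'I_n -> nat) (T1 T2 k : nat) (mu : rat).
Hypothesis hp : forall j, (0 < p j)%N.
Hypothesis hw : forall j, (0 < w j)%N.
Hypothesis hwspt : forall i j : 'I_n, (i < j)%N -> (p i * w j <= p j * w i)%N.
Hypothesis hT : (T1 < T2)%N.
Hypothesis hmu : 0 <= mu.

Lemma sum_sub (P Q : pred 'I_n) (f : 'I_n -> nat) :
  (forall l, P l -> Q l) -> (\sum_(l < n | P l) f l <= \sum_(l < n | Q l) f l)%N.
Proof.
move=> PQ; rewrite [X in (_ <= X)%N](bigID P) /=.
rewrite (eq_bigl P); first exact: leq_addr.
by move=> l /=; case: (boolP (P l)) => H; rewrite ?andbT ?andbF ?(PQ _ H).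
Qed.

Lemma C_origE j : C_orig p j = (S_orig p j + p j)%N.
Proof.
rewrite /C_orig /S_orig (bigD1 j) //= addnC; congr (_ + _)%N.
apply: eq_bigl => l /=; rewrite -val_eqE /=; case: (ltngtP l j); lia.
Qed.

Lemma C_orig_lt (i j : 'I_n) : (i < j)%N -> (C_orig p i + p j <= C_orig p j)%N.
Proof.
move=> ij; rewrite [X in (_ <= X)%N]C_origE leq_add2r /S_orig /C_orig.
by apply: sum_sub => l /=; lia.
Qed.

Lemma C_orig_le (i j : 'I_n) : (i <= j)%N -> (C_orig p i <= C_orig p j)%N.
Proof. by move=> ij; apply: sum_sub => l /=; lia. Qed.

Lemma Dmax_le S x : 0 <= x -> (forall j, Delta p S j <= x) -> Dmax p S <= x.
Proof. move=> x0 H; apply/bigmax_leP; split => // j _; exact: H. Qed.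

Lemma Delta_le_Dmax S j : Delta p S j <= Dmax p S.
Proof. exact: (le_bigmax _ _ j). Qed.



Lemma ex_min (I : finType) (P : I -> Prop) (f : I -> rat) :
  (exists x, P x) -> exists x, P x /\ forall y, P y -> f x <= f y.
Proof.
suff H : forall s : seq I, (exists x, x \in s /\ P x) ->
   exists x, P x /\ forall y, y \in s -> P y -> f x <= f y.
  move=> [x Px]; have [|y [Py Hy]] := H (enum I); first by exists x; rewrite mem_enum.
  by exists y; split=> // z Pz; apply: Hy; rewrite ?mem_enum.
elim=> [|a s IH] [x [xs Px]]; first by [].
have [[y [ys Py]]|NE] := classic (exists y, y \in s /\ P y).
  have [z [Pz Hz]] := IH (ex_intro _ y (conj ys Py)).
  have [Pa|nPa] := classic (P a).
    case: (leP (f a) (f z)) => Haz.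
      exists a; split=> // u; rewrite inE => /orP[/eqP->|us] Pu //.
      exact: le_trans Haz (Hz _ us Pu).
    exists z; split=> // u; rewrite inE => /orP[/eqP->|us] Pu; last exact: Hz.
    exact: ltW.
  exists z; split=> // u; rewrite inE => /orP[/eqP->|us] Pu //; exact: Hz.
have Pa : P a.
  move: xs; rewrite inE => /orP[/eqP<-|xs] //; by case: NE; exists x.
exists a; split=> // u; rewrite inE => /orP[/eqP->|us] Pu //.
by case: NE; exists u.
Qed.

Definition early S (j : 'I_n) : bool := Cmp p S j <= T1%:R.
Definition invp S (ij : 'I_n * 'I_n) : bool :=
  [&& (ij.2 < ij.1)%N, S ij.1 < S ij.2 & early S ij.1 == early S ij.2].
Definition inv S := #|[set ij | invp S ij]|.

Lemma abs_between (a x b D : rat) : `|a| <= D -> `|b| <= D -> a <= x -> x <= b -> `|x| <= D.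
Proof.
rewrite !ler_norml => /andP[h1 h2] /andP[h3 h4] h5 h6; apply/andP; split; lra.
Qed.

Lemma step S (i j : 'I_n) : feasible p T1 T2 k S -> invp S (j, i) ->
  exists S', [/\ feasible p T1 T2 k S', cost p w mu S' <= cost p w mu S & (inv S' < inv S)%N].
Proof.
move=> FS Hji.
have [[a b] [Hab Hmin]] := @ex_min _ (fun ab => invp S ab) (fun ab => S ab.2 - S ab.1)
  (ex_intro _ (j, i) Hji).
clear i j Hji; rename a into j; rename b into i.
move: (Hab); rewrite /invp /= => /and3P[ij Sji Eji].
case: FS => [[v0 [vo vu]] Dk].
have px : forall x, 0 < (p x)%:R :> rat by move=> x; rewrite ltr0n.
have neij : i != j by apply/eqP => E; move: ij; rewrite E ltnn.
have F1 : Cmp p S j <= S i.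
  have neji : j != i by rewrite eq_sym.
  have [//|] := vo j i neji.
  rewrite /Cmp => h; have := px i; lra.
have hT' : (T1%:R : rat) < T2%:R by rewrite ltr_nat.
have Sij : S j < S i := Sji.
have out : forall m, m != i -> m != j -> Cmp p S m <= S j \/ Cmp p S i <= S m.
  move=> m mi mj.
  have [h1|h1] := vo m j mj; first by left.
  have [h2|h2] := vo m i mi; last by right.
  exfalso.
  have pm := px m; have pj := px j; have pi := px i.
  have Emj : early S m = early S j.
    move: Eji; rewrite /early; case Ej: (Cmp p S j <= T1%:R) => /eqP Ei.
      move: Ej Ei; rewrite /Cmp in h1 h2 * => Ej Ei.
      by symmetry in Ei; apply/idP; move: Ei => /idP Ei; lra.
    have [Ej'|Tj] := vu j; first by rewrite Ej' in Ej.
    move: Ej; rewrite /Cmp in h1 h2 Tj * => Ej.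
    apply/negbTE; rewrite -ltNge; lra.
  have Emi : early S m = early S i by rewrite Emj; apply/eqP.
  move: h1 h2; rewrite /Cmp => h1 h2.
  case: (ltngtP i m) => [im|mi'|/val_inj E]; last by rewrite E eqxx in mi.
  - have := Hmin (m, i); rewrite /invp /= im Emi eqxx andbT /= => H.
    have h3 : S m < S i by lra.
    have := H h3; lra.
  - have := Hmin (j, m); rewrite /invp /= Emj eqxx andbT => H.
    have mj' : (m < j)%N by apply: ltn_trans mi' ij.
    rewrite mj' /= in H.
    have h3 : S j < S m by lra.
    have := H h3; lra.
have neji : j != i by rewrite eq_sym.
pose S' := fun x : 'I_n => if x == i then S j else if x == j then S j + (p i)%:R else S x.
have S'i : S' i = S j by rewrite /S' eqxx.
have S'j : S' j = S j + (p i)%:R by rewrite /S' (negbTE neji) eqxx.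
have S'o : forall x, x != i -> x != j -> S' x = S x.
  by move=> x xi xj; rewrite /S' (negbTE xi) (negbTE xj).
have cls : forall x, x = i \/ x = j \/ [/\ x != i, x != j & S' x = S x].
  move=> x; have [->|xi] := eqVneq x i; first by left.
  have [->|xj] := eqVneq x j; first by right; left.
  by right; right; split => //; apply: S'o.
have pi := px i; have pj := px j.
have F1' : S j + (p j)%:R <= S i by move: F1; rewrite /Cmp.
have box : forall y, y = i \/ y = j -> S j <= S' y /\ S' y + (p y)%:R <= S i + (p i)%:R.
  by move=> y [->|->]; rewrite ?S'i ?S'j; split; lra.
have Eij : early S i = early S j by apply/esym/eqP.
have Eearly : forall x, early S' x = early S x.
  move=> x; have [->|[->|[xi xj Ex]]] := cls x; last by rewrite /early /Cmp Ex.
  - rewrite Eij /early /Cmp S'i; case Ej: (S j + (p j)%:R <= T1%:R).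
      have Ei : S i + (p i)%:R <= T1%:R by move: Eij; rewrite /early /Cmp Ej.
      have H : S j + (p i)%:R <= T1%:R by lra.
      by rewrite H.
    have [Ej'|Tj] := vu j; first by move: Ej'; rewrite /Cmp Ej.
    have H : ~~ (S j + (p i)%:R <= T1%:R) by rewrite -ltNge; lra.
    by rewrite (negbTE H).
  - rewrite /early /Cmp S'j; case Ej: (S j + (p j)%:R <= T1%:R).
      have Ei : S i + (p i)%:R <= T1%:R by move: Eij; rewrite /early /Cmp Ej.
      have H : S j + (p i)%:R + (p j)%:R <= T1%:R by lra.
      by rewrite H.
    have [Ej'|Tj] := vu j; first by move: Ej'; rewrite /Cmp Ej.
    have H : ~~ (S j + (p i)%:R + (p j)%:R <= T1%:R) by rewrite -ltNge; lra.
    by rewrite (negbTE H).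
have hCo : ((C_orig p i)%:R : rat) + (p j)%:R <= (C_orig p j)%:R.
  by rewrite -natrD ler_nat C_orig_lt.
have HD0 : 0 <= Dmax p S.
  by apply: le_trans (Delta_le_Dmax S i); apply: normr_ge0.
have HDel : forall x, Delta p S' x <= Dmax p S.
  have Di := Delta_le_Dmax S i; have Dj := Delta_le_Dmax S j.
  move: Di Dj; rewrite /Delta /Cmp => Di Dj.
  move=> x; have [->|[->|[xi xj Ex]]] := cls x; last by rewrite /Delta /Cmp Ex; exact: (Delta_le_Dmax S x).
  - apply: (abs_between _ (S' i + (p i)%:R - (C_orig p i)%:R) _ _ Dj Di); rewrite S'i; lra.
  - apply: (abs_between _ (S' j + (p j)%:R - (C_orig p j)%:R) _ _ Dj Di); rewrite S'j; lra.
have HDm : Dmax p S' <= Dmax p S by apply: Dmax_le.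
exists S'; split.
- split; last exact: le_trans HDm Dk.
  split; [|split].
  + move=> x; have [->|[->|[xi xj ->]]] := cls x; rewrite ?S'i ?S'j //.
    have := v0 j; lra.
  + move=> a b ab; rewrite /Cmp.
    have [ea|[ea|[ai aj ea]]] := cls a; have [eb|[eb|[bi bj eb]]] := cls b.
    * by move: ab; rewrite ea eb eqxx.
    * by left; rewrite ea eb S'i S'j.
    * have [o|o] := out b bi bj; move: o; rewrite /Cmp eb => o;
      have [b1 b2] := box a (or_introl ea); [right|left]; lra.
    * by right; rewrite ea eb S'i S'j.
    * by move: ab; rewrite ea eb eqxx.
    * have [o|o] := out b bi bj; move: o; rewrite /Cmp eb => o;
      have [b1 b2] := box a (or_intror ea); [right|left]; lra.
    * have [o|o] := out a ai aj; move: o; rewrite /Cmp ea => o;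
      have [b1 b2] := box b (or_introl eb); [left|right]; lra.
    * have [o|o] := out a ai aj; move: o; rewrite /Cmp ea => o;
      have [b1 b2] := box b (or_intror eb); [left|right]; lra.
    * rewrite ea eb; exact: vo.
  + move=> x; have [ex|[ex|[xi xj Ex]]] := cls x; last by rewrite /Cmp Ex; exact: vu.
    * case Ej: (early S j).
        left; move: Ej; rewrite -Eij /early /Cmp => Ei; have [b1 b2] := box x (or_introl ex); rewrite ex in b2 *; lra.
      right; have [Ej'|Tj] := vu j; first by move: Ej; rewrite /early Ej'.
      have [b1 b2] := box x (or_introl ex); lra.
    * case Ej: (early S j).
        left; move: Ej; rewrite -Eij /early /Cmp => Ei; have [b1 b2] := box x (or_intror ex); rewrite ex in b2 *; lra.
      right; have [Ej'|Tj] := vu j; first by move: Ej; rewrite /early Ej'.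
      have [b1 b2] := box x (or_intror ex); lra.
- rewrite /cost; apply: lerD; first exact: ler_wpM2l.
  rewrite (bigD1 i) // [X in _ <= X](bigD1 i) //= (bigD1 j) ?neji //=.
  rewrite [\sum_(x < n | x != i) (w x)%:R * Cmp p S x](bigD1 j) ?neji //=.
  rewrite (eq_bigr (fun x => (w x)%:R * Cmp p S x)); last first.
    by move=> x /andP[xj xi]; rewrite /Cmp S'o.
  rewrite /Cmp S'i S'j.
  have hW : ((p i)%:R : rat) * (w j)%:R <= (p j)%:R * (w i)%:R.
    by rewrite -!natrM ler_nat hwspt.
  have h : 0 <= ((w i)%:R : rat) * (S i - S j - (p j)%:R).
    apply: mulr_ge0; [by rewrite ler0n | lra].
  lra.
- apply: proper_card; rewrite properE; apply/andP; split.
  + apply/subsetP => -[a b]; rewrite !inE /invp /= => /and3P[ba Sab Eab].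
    rewrite -!Eearly Eab ba andbT /=.
    have [ea|[ea|[ai aj ea]]] := cls a; have [eb|[eb|[bi bj eb]]] := cls b.
    * by move: ba; rewrite ea eb ltnn.
    * by move: ba; rewrite ea eb ltnNge (ltnW ij).
    * move: Sab; rewrite ea eb S'i => Sab; have [o|o] := out b bi bj; move: o; rewrite /Cmp => o; have := px b; lra.
    * by move: Sab; rewrite ea eb S'i S'j; lra.
    * by move: ba; rewrite ea eb ltnn.
    * move: Sab; rewrite ea eb S'j => Sab; have [o|o] := out b bi bj; move: o; rewrite /Cmp => o; have := px b; lra.
    * move: Sab; rewrite ea eb S'i => Sab; have [o|o] := out a ai aj; move: o; rewrite /Cmp => o; have := px a; lra.
    * move: Sab; rewrite ea eb S'j => Sab; have [o|o] := out a ai aj; move: o; rewrite /Cmp => o; have := px a; lra.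
    * by move: Sab; rewrite ea eb.
  + apply/subsetPn; exists (j, i); first by rewrite inE.
    rewrite inE /invp /= S'i S'j; apply/negP => /and3P[_ H _]; lra.
Qed.

Lemma bubble S : feasible p T1 T2 k S ->
  exists S1, [/\ feasible p T1 T2 k S1, cost p w mu S1 <= cost p w mu S &
                forall ab, ~~ invp S1 ab].
Proof.
suff H : forall N S, (inv S <= N)%N -> feasible p T1 T2 k S ->
  exists S1, [/\ feasible p T1 T2 k S1, cost p w mu S1 <= cost p w mu S &
                forall ab, ~~ invp S1 ab].
  by move=> FS; apply: (H (inv S)).
elim=> [|N IH] S0 HN FS.
  case: (boolP [exists ab, invp S0 ab]) => [/existsP[[a b] Hab]|NE].
    have [S' [_ _ HS']] := step S0 b a FS Hab; by move: HS'; rewrite ltnNge (leq_trans HN) .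
  exists S0; split => // ab; apply/negP => Hab; move/existsP: NE; apply; by exists ab.
case: (boolP [exists ab, invp S0 ab]) => [/existsP[[a b] Hab]|NE].
  have [S' [FS' C' HS']] := step S0 b a FS Hab.
  have [S1 [F1 C1 H1]] := IH S' (ltnSE (leq_trans HS' HN)) FS'.
  by exists S1; split => //; apply: le_trans C1 C'.
exists S0; split => // ab; apply/negP => Hab; move/existsP: NE; apply; by exists ab.
Qed.

Lemma ordered_of S : feasible p T1 T2 k S -> (forall ab, ~~ invp S ab) ->
  forall a b : 'I_n, (a < b)%N -> early S a = early S b -> S a < S b.
Proof.
move=> [[v0 [vo vu]] _] H a b ab Eab.
have := H (b, a); rewrite /invp /= ab Eab eqxx andbT /= -leNgt => Hba.
rewrite lt_neqAle Hba andbT; apply/negP => /eqP Eq.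
have neq : a != b by apply/eqP => E; move: ab; rewrite E ltnn.
have h1 : (0:rat) < (p a)%:R by rewrite ltr0n.
have h2 : (0:rat) < (p b)%:R by rewrite ltr0n.
by case: (vo a b neq); rewrite /Cmp Eq; lra.
Qed.

Definition part (E : {set 'I_n}) (j : 'I_n) : pred 'I_n := fun m => (m \in E) == (j \in E).
Definition seg (Q : pred 'I_n) (m j : 'I_n) : nat := \sum_(l < n | Q l && (m <= l < j)%N) p l.
Definition base (E : {set 'I_n}) (j : 'I_n) : nat := if j \in E then 0%N else T2.
Definition Aq E j := \max_(m < n | part E j m && (m <= j)%N) (base E j + seg (part E j) m j)%N.
Definition Bq E j := \max_(m < n | part E j m && (m <= j)%N) (S_orig p m + seg (part E j) m j)%N.
Definition Sch E (t : rat) (j : 'I_n) : rat := Num.max (Aq E j)%:R ((Bq E j)%:R - t).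

Lemma seg_split (Q : pred 'I_n) (m l j : 'I_n) : (m <= l <= j)%N -> seg Q m j = (seg Q m l + seg Q l j)%N.
Proof.
move=> /andP[ml lj]; rewrite /seg (bigID (fun x : 'I_n => (x < l)%N)) /=; congr (_ + _)%N.
  by apply: eq_bigl => x; case: (Q x); rewrite /= ?andbF //; lia.
by apply: eq_bigl => x; case: (Q x); rewrite /= ?andbF //; lia.
Qed.

Lemma seg_ge (Q : pred 'I_n) (m l j : 'I_n) : Q l -> (m <= l < j)%N -> (p l <= seg Q m j)%N.
Proof.
move=> Ql mlj; rewrite /seg (bigD1 l) /=; last by rewrite Ql.
exact: leq_addr.
Qed.

Lemma seg_nil (Q : pred 'I_n) (j : 'I_n) : seg Q j j = 0%N.
Proof. by rewrite /seg big_pred0 // => x; case: (Q x) => //=; lia. Qed.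

Lemma seg_one (Q : pred 'I_n) (m j : 'I_n) : (m < j)%N -> Q m ->
  (forall l : 'I_n, Q l -> (m < l < j)%N -> False) -> seg Q m j = p m.
Proof.
move=> mj Qm H; rewrite /seg (big_pred1 m) // => x /=.
have [->|xm] := eqVneq x m; first by rewrite Qm leqnn mj.
case Qx: (Q x) => //=; apply/negP => /andP[h1 h2]; apply: (H x Qx).
rewrite h2 andbT ltn_neqAle h1 andbT; apply/eqP => E; move/eqP: xm; apply; apply: val_inj; exact: esym E.
Qed.

Lemma part_eq E (i j : 'I_n) : part E j i -> part E i = part E j.
Proof. by rewrite /part => /eqP ->. Qed.

Lemma part_refl E (j : 'I_n) : part E j j.
Proof. by rewrite /part eqxx. Qed.

Lemma base_eq E (i j : 'I_n) : part E j i -> base E i = base E j.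
Proof. by rewrite /part /base => /eqP ->. Qed.

Lemma A_mono E (i j : 'I_n) : (i < j)%N -> part E j i -> (Aq E i + p i <= Aq E j)%N.
Proof.
move=> ij Pji; rewrite /Aq (part_eq _ _ _ Pji) (base_eq _ _ _ Pji).
set F := fun m => (base E j + seg (part E j) m j)%N.
have Hj : (F i <= \max_(m < n | part E j m && (m <= j)%N) F m)%N.
  by apply: leq_bigmax_cond; rewrite Pji ltnW.
have Hpi : (p i <= seg (part E j) i j)%N by apply: seg_ge; rewrite ?leqnn.
suff : (\max_(m < n | part E j m && (m <= i)%N) (base E j + seg (part E j) m i)%N
        <= \max_(m < n | part E j m && (m <= j)%N) F m - p i)%N by rewrite /F in Hj *; lia.
apply/bigmax_leqP => m /andP[Pm mi].
have Hm : (F m <= \max_(m < n | part E j m && (m <= j)%N) F m)%N.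
  by apply: leq_bigmax_cond; rewrite Pm (leq_trans mi (ltnW ij)).
move: Hm; rewrite /F (@seg_split _ m i j) ?mi ?(ltnW ij) //; lia.
Qed.

Lemma B_mono E (i j : 'I_n) : (i < j)%N -> part E j i -> (Bq E i + p i <= Bq E j)%N.
Proof.
move=> ij Pji; rewrite /Bq (part_eq _ _ _ Pji).
set F := fun m => (S_orig p m + seg (part E j) m j)%N.
have Hpi : (p i <= seg (part E j) i j)%N by apply: seg_ge; rewrite ?leqnn.
suff : (\max_(m < n | part E j m && (m <= i)%N) (S_orig p m + seg (part E j) m i)%N
        <= \max_(m < n | part E j m && (m <= j)%N) F m - p i)%N.
  have Hj : (F i <= \max_(m < n | part E j m && (m <= j)%N) F m)%N.
    by apply: leq_bigmax_cond; rewrite Pji ltnW.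
  by rewrite /F in Hj *; lia.
apply/bigmax_leqP => m /andP[Pm mi].
have Hm : (F m <= \max_(m < n | part E j m && (m <= j)%N) F m)%N.
  by apply: leq_bigmax_cond; rewrite Pm (leq_trans mi (ltnW ij)).
move: Hm; rewrite /F (@seg_split _ m i j) ?mi ?(ltnW ij) //; lia.
Qed.

Lemma Sch_mono E t (i j : 'I_n) : (i < j)%N -> part E j i -> Sch E t i + (p i)%:R <= Sch E t j.
Proof.
move=> ij Pji; have HA := A_mono _ _ _ ij Pji; have HB := B_mono _ _ _ ij Pji.
have HA' : ((Aq E i)%:R : rat) + (p i)%:R <= (Aq E j)%:R by rewrite -natrD ler_nat.
have HB' : ((Bq E i)%:R : rat) + (p i)%:R <= (Bq E j)%:R by rewrite -natrD ler_nat.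
rewrite /Sch; case: (leP (Aq E i)%:R ((Bq E i)%:R - t)) => h1;
  case: (leP (Aq E j)%:R ((Bq E j)%:R - t)) => h2; lra.
Qed.

Lemma Sch_geA E t j : ((Aq E j)%:R : rat) <= Sch E t j.
Proof. by rewrite /Sch le_max lexx. Qed.
Lemma Sch_geB E t j : ((Bq E j)%:R : rat) - t <= Sch E t j.
Proof. by rewrite /Sch le_max lexx orbT. Qed.
Lemma Sch_le E t j z : ((Aq E j)%:R : rat) <= z -> (Bq E j)%:R - t <= z -> Sch E t j <= z.
Proof. by move=> h1 h2; rewrite /Sch ge_max h1 h2. Qed.

Lemma A_ge_base E j : (base E j <= Aq E j)%N.
Proof.
apply: leq_trans (leq_addr (seg (part E j) j j) _) _.
rewrite /Aq; have := @leq_bigmax_cond _ (fun m : 'I_n => part E j m && (m <= j)%N) (fun m => base E j + seg (part E j) m j)%N j.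
by rewrite part_refl leqnn; apply.
Qed.

Lemma B_ge_So E j : (S_orig p j <= Bq E j)%N.
Proof.
apply: leq_trans (leq_addr (seg (part E j) j j) _) _.
rewrite /Bq; have := @leq_bigmax_cond _ (fun m : 'I_n => part E j m && (m <= j)%N) (fun m => S_orig p m + seg (part E j) m j)%N j.
by rewrite part_refl leqnn; apply.
Qed.


Lemma bigmax_wit (P : pred 'I_n) (F : 'I_n -> nat) x0 :
  P x0 -> exists2 m, P m & (\max_(i | P i) F i)%N = F m.
Proof.
move=> Px0; have : (0 < #|P|)%N by apply/card_gt0P; exists x0.
by move=> /(eq_bigmax_cond F) [m Pm ->]; exists m.
Qed.

Lemma chain S : feasible p T1 T2 k S -> (forall ab, ~~ invp S ab) ->
  forall m j : 'I_n, (m <= j)%N -> early S m = early S j ->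
  S m + (seg (part [set x | early S x] j) m j)%:R <= S j.
Proof.
move=> FS NI; have ord := ordered_of S FS NI.
have [[v0 [vo vu]] _] := FS.
set E := [set x | early S x].
have partE : forall j m : 'I_n, part E j m = (early S m == early S j).
  by move=> j m; rewrite /part !inE.
suff H : forall d (m j : 'I_n), (j - m <= d)%N -> (m <= j)%N -> early S m = early S j ->
  S m + (seg (part E j) m j)%:R <= S j by move=> m j; apply: H (leqnn _).
elim=> [|d IH] m j hd mj Emj.
  have -> : m = j by apply: val_inj; apply/eqP; rewrite eqn_leq mj /=; lia.
  by rewrite seg_nil addr0.
have [Emj'|nmj] := eqVneq (nat_of_ord m) (nat_of_ord j).
  have -> : m = j by apply: val_inj.
  by rewrite seg_nil addr0.
have mj' : (m < j)%N by rewrite ltn_neqAle nmj mj.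
case: (boolP [exists l, part E j l && (m < l < j)%N]) => [/existsP[l /andP[Pl /andP[ml lj]]]|NE].
  have Elj : early S l = early S j by move: Pl; rewrite partE => /eqP.
  rewrite (@seg_split _ m l j) ?(ltnW ml) ?(ltnW lj) // natrD.
  have H1 := IH m l ltac:(lia) (ltnW ml) ltac:(by rewrite Emj Elj).
  have H2 := IH l j ltac:(lia) (ltnW lj) Elj.
  rewrite (part_eq _ _ _ Pl) in H1; lra.
rewrite (@seg_one _ m j) //; last first.
- move=> l Pl mlj; move/existsP: NE; apply; exists l; by rewrite Pl.
- by rewrite partE Emj.
have Smj := ord m j mj' Emj.
have neq : m != j by apply/eqP => E'; move: nmj; rewrite E' eqxx.
have pj : (0:rat) < (p j)%:R by rewrite ltr0n.
by case: (vo m j neq); rewrite /Cmp; lra.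
Qed.


Definition Gc (E : {set 'I_n}) (t : rat) : Prop :=
  [/\ 0 <= t, t <= k%:R, (forall j, j \in E -> Sch E t j + (p j)%:R <= T1%:R) &
      (forall j, Sch E t j + (p j)%:R <= (C_orig p j)%:R + t)].
Definition hh (E : {set 'I_n}) (t : rat) : rat := mu * t + \sum_(j < n) (w j)%:R * (Sch E t j + (p j)%:R).
Definition Pc (E : {set 'I_n}) (t : rat) : Prop :=
  feasible p T1 T2 k (Sch E t) /\ (forall j, j \in E -> Cmp p (Sch E t) j <= T1%:R).

Lemma Dmax_ge0 S : 0 <= Dmax p S.
Proof. by have /bigmax_leP[] := lexx (Dmax p S). Qed.

Lemma CoE (j : 'I_n) : ((C_orig p j)%:R : rat) = (S_orig p j)%:R + (p j)%:R.
Proof. by rewrite C_origE natrD. Qed.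

Lemma dom1 S : feasible p T1 T2 k S -> (forall ab, ~~ invp S ab) ->
  Gc [set x | early S x] (Dmax p S) /\ hh [set x | early S x] (Dmax p S) <= cost p w mu S.
Proof.
move=> FS NI; have ch := chain S FS NI.
have [[v0 [vo vu]] Dk] := FS.
set E := [set x | early S x]; set D := Dmax p S.
have partE : forall j m : 'I_n, part E j m = (early S m == early S j).
  by move=> j m; rewrite /part !inE.
have HSch : forall j, Sch E D j <= S j.
  move=> j; apply: Sch_le.
    rewrite /Aq; have [m /andP[Pm mj] ->] := bigmax_wit (fun m : 'I_n => part E j m && (m <= j)%N) (fun m => base E j + seg (part E j) m j)%N
      j (ltac:(by rewrite part_refl leqnn) : part E j j && (j <= j)%N).
    have Emj : early S m = early S j by move: Pm; rewrite partE => /eqP.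
    have := ch m j mj Emj; rewrite natrD.
    have : ((base E j)%:R : rat) <= S m.
      rewrite /base inE; case Ej: (early S j); first exact: v0.
      have [Em|] := vu m; last by [].
      by move: Ej; rewrite -Emj /early Em.
    lra.
  rewrite /Bq; have [m /andP[Pm mj] ->] := bigmax_wit (fun m : 'I_n => part E j m && (m <= j)%N) (fun m => S_orig p m + seg (part E j) m j)%N
      j (ltac:(by rewrite part_refl leqnn) : part E j j && (j <= j)%N).
  have Emj : early S m = early S j by move: Pm; rewrite partE => /eqP.
  have := ch m j mj Emj; rewrite natrD.
  have := Delta_le_Dmax S m; rewrite /Delta /Cmp CoE ler_norml => /andP[h1 h2].
  rewrite -/D in h1 h2; lra.
split.
  split => //; first exact: Dmax_ge0.
    move=> j; rewrite inE /early /Cmp => Ej; have := HSch j; lra.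
  move=> j; have := HSch j; have := Delta_le_Dmax S j.
  rewrite /Delta /Cmp ler_norml => /andP[h1 h2]; rewrite -/D in h1 h2; lra.
rewrite /hh /cost; apply: lerD => //; apply: ler_sum => j _.
by apply: ler_wpM2l; [rewrite ler0n | rewrite /Cmp; have := HSch j; lra].
Qed.

Lemma Gc_Pc (E : {set 'I_n}) t : Gc E t -> Pc E t /\ cost p w mu (Sch E t) <= hh E t.
Proof.
move=> [t0 tk HE HC].
have hT' : (T1%:R : rat) < T2%:R by rewrite ltr_nat.
have notE : forall j, j \notin E -> (T2%:R : rat) <= Sch E t j.
  move=> j jE; apply: le_trans (Sch_geA E t j); rewrite ler_nat.
  by have := A_ge_base E j; rewrite /base (negbTE jE).
have px : forall x, (0:rat) < (p x)%:R by move=> x; rewrite ltr0n.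
have HD : Dmax p (Sch E t) <= t.
  apply: Dmax_le => // j; rewrite /Delta /Cmp ler_norml; apply/andP; split; last first.
    by have := HC j; lra.
  have := Sch_geB E t j; have : ((S_orig p j)%:R : rat) <= (Bq E j)%:R by rewrite ler_nat B_ge_So.
  rewrite CoE; lra.
split; last first.
  rewrite /cost /hh; apply: lerD; first exact: ler_wpM2l.
  by apply: ler_sum => j _; rewrite /Cmp.
split => //; split; last exact: le_trans HD tk.
split; [|split].
- move=> j; apply: le_trans (Sch_geA E t j); exact: ler0n.
- move=> a b ab; rewrite /Cmp.
  case Pab: (part E b a).
    case: (ltngtP a b) => [lt|gt|/val_inj eq]; last by rewrite eq eqxx in ab.
      by left; apply: Sch_mono.
    right; apply: Sch_mono => //; move: Pab; by rewrite /part eq_sym.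
  move: Pab; rewrite /part; case aE: (a \in E); case bE: (b \in E) => //= _.
    left; have := HE a aE; have := notE b (negbT bE); lra.
  right; have := HE b bE; have := notE a (negbT aE); lra.
- move=> j; rewrite /Cmp; case jE: (j \in E); first by left; exact: HE.
  by right; apply: notE; rewrite jE.
Qed.


Lemma Gc_round (E : {set 'I_n}) t : Gc E t ->
  exists m : nat, [/\ (m <= 2 * k)%N, Gc E (m%:R / 2) & hh E (m%:R / 2) <= hh E t].
Proof.
move=> G; have [t0 tk HE HC] := G.
set f := Num.floor (2 * t); set c := Num.ceil (2 * t).
have fl : (f%:~R : rat) <= 2 * t := floor_le _.
have cg : 2 * t <= (c%:~R : rat) := ceil_ge _.
have f0 : (0 <= f)%R by rewrite floor_ge_int; lra.
have f0' : (0 : rat) <= f%:~R by rewrite ler0z.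
have c2k : (c <= ((2 * k)%N)%:Z)%R.
  rewrite ceil_le_int; have -> : ((((2 * k)%N)%:Z)%:~R : rat) = 2 * k%:R by rewrite -natrM.
  lra.
have cf : (c <= f + 1)%R.
  by rewrite ceil_le_int; have := floorD1_gt (2 * t); rewrite -/f; lra.
have Kn : forall a b : nat, ((a%:R : rat) - b%:R <= 2 * t) -> (a%:R : rat) - b%:R <= f%:~R.
  move=> a b h; have h' : (((a%:Z - b%:Z)%:~R : rat) <= 2 * t) by rewrite intrB.
  by have := h'; rewrite -floor_ge_int -(ler_int rat) intrB.
have Kl : forall a b : nat, ((a%:R : rat) - b%:R < c%:~R) -> (a%:R : rat) - b%:R <= f%:~R.
  move=> a b h; have h' : (a%:Z - b%:Z < c)%R by rewrite -(ltr_int rat) intrB.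
  have h'' : (a%:Z - b%:Z <= f)%R by lia.
  by move: h''; rewrite -(ler_int rat) intrB.
set lo := (f%:~R : rat) / 2; set hi := (c%:~R : rat) / 2.
have lot : lo <= t by rewrite /lo; lra.
have thi : t <= hi by rewrite /hi; lra.
have Glo : Gc E lo.
  split.
  - rewrite /lo; lra.
  - lra.
  - move=> j jE; have := HE j jE; have := Sch_geA E t j; have := Sch_geB E t j.
    move=> hB hA hj.
    have := Kn (2 * (Bq E j + p j)) (2 * T1); rewrite !natrM !natrD => K.
    have := Sch_le E lo j (T1%:R - (p j)%:R); rewrite /lo; lra.
  - move=> j; have := HC j; have := Sch_geA E t j; have := Sch_geB E t j.
    move=> hB hA hj.
    have := Kn (2 * (Aq E j + p j)) (2 * C_orig p j); rewrite !natrM !natrD => K1.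
    have := Kn (Bq E j + p j) (C_orig p j); rewrite !natrD => K2.
    have := Sch_le E lo j ((C_orig p j)%:R + lo - (p j)%:R); rewrite /lo; lra.
have Hhi : forall j, Sch E hi j <= Sch E t j.
  move=> j; apply: Sch_le; first exact: Sch_geA.
  have := Sch_geB E t j; lra.
have Ghi : Gc E hi.
  have c2k' : (c%:~R : rat) <= ((2 * k)%N)%:R by rewrite -(ler_int rat) in c2k.
  rewrite natrM in c2k'.
  split.
  - rewrite /hi; lra.
  - rewrite /hi; lra.
  - move=> j jE; have := HE j jE; have := Hhi j; lra.
  - move=> j; have := HC j; have := Hhi j; lra.
have lin : forall x j, lo <= x -> x <= hi ->
    Sch E x j = if hi <= (Bq E j)%:R - (Aq E j)%:R then (Bq E j)%:R - x else (Aq E j)%:R.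
  move=> x j h1 h2; case: ifP => Hs.
    apply/le_anti; rewrite Sch_geB andbT; apply: Sch_le; lra.
  have Hs' : (Bq E j)%:R - (Aq E j)%:R < hi by rewrite ltNge Hs.
  have := Kl (2 * Bq E j) (2 * Aq E j); rewrite !natrM => K.
  apply/le_anti; rewrite Sch_geA andbT; apply: Sch_le; rewrite /lo /hi in h1 h2 Hs' *; lra.
set W := \sum_(j < n) (if hi <= (Bq E j)%:R - (Aq E j)%:R then (w j)%:R else 0 : rat).
have Hlin : forall x y, lo <= x -> x <= hi -> lo <= y -> y <= hi ->
    hh E x - hh E y = (mu - W) * (x - y).
  move=> x y hx1 hx2 hy1 hy2; rewrite /hh.
  set Sx := \sum_(j < n) _; set Sy := \sum_(j < n) _.
  have e : Sx - Sy = - W * (x - y).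
    rewrite /Sx /Sy -sumrB mulNr mulr_suml -sumrN; apply: eq_bigr => j _.
    rewrite (lin x j) // (lin y j) //; case: ifP => _; ring.
  have -> : Sx = Sy + (- W * (x - y)) by rewrite -e; ring.
  ring.
case: (leP 0 (mu - W)) => hb.
  exists `|f|%N; split.
  - have : (f <= c)%R by rewrite -(ler_int rat); lra.
    lia.
  - by rewrite natr_absz ger0_norm.
  - rewrite natr_absz ger0_norm // -/lo.
    have := Hlin t lo lot thi (lexx _) ltac:(rewrite /lo /hi; lra).
    have : 0 <= (mu - W) * (t - lo) by apply: mulr_ge0; lra.
    lra.
have c0 : (0 <= c)%R by rewrite -(ler_int rat); lra.
exists `|c|%N; split.
- lia.
- by rewrite natr_absz ger0_norm.
- rewrite natr_absz ger0_norm // -/hi.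
  have := Hlin hi t ltac:(rewrite /lo /hi; lra) (lexx _) lot thi.
  have : (mu - W) * (hi - t) <= 0 by rewrite mulr_le0_ge0 //; lra.
  lra.
Qed.


Lemma dom S : feasible p T1 T2 k S ->
  exists x : {set 'I_n} * 'I_(2 * k).+1,
    Pc x.1 ((x.2 : nat)%:R / 2) /\ cost p w mu (Sch x.1 ((x.2 : nat)%:R / 2)) <= cost p w mu S.
Proof.
move=> FS; have [S1 [F1 C1 N1]] := bubble S FS.
have [G1 H1] := dom1 S1 F1 N1.
have [m [mk Gm Hm]] := Gc_round _ _ G1.
have [Pm Cm] := Gc_Pc _ _ Gm.
have mk' : (m < (2 * k).+1)%N by rewrite ltnS.
exists ([set x | early S1 x], Ordinal mk'); split => //=.
by apply: le_trans Cm (le_trans Hm (le_trans H1 C1)).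
Qed.

Lemma main : (exists S, feasible p T1 T2 k S) ->
  exists Sopt : 'I_n -> rat,
    optimal p w T1 T2 k mu Sopt /\
    index_ordered (in_earlier p T1 Sopt) Sopt /\
    index_ordered (in_later p T2 Sopt) Sopt.
Proof.
move=> [S0 F0].
have [x0 [P0 _]] := dom S0 F0.
have [x [Px Hx]] := @ex_min _ (fun x : {set 'I_n} * 'I_(2 * k).+1 => Pc x.1 ((x.2 : nat)%:R / 2))
  (fun x => cost p w mu (Sch x.1 ((x.2 : nat)%:R / 2))) (ex_intro _ x0 P0).
case: x Px Hx => E m /= [FS HE] Hx.
set t := ((m : nat)%:R / 2 : rat).
have hT' : (T1%:R : rat) < T2%:R by rewrite ltr_nat.
have px : forall x, (0:rat) < (p x)%:R by move=> x; rewrite ltr0n.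
have notE : forall j, j \notin E -> (T2%:R : rat) <= Sch E t j.
  move=> j jE; apply: le_trans (Sch_geA E t j); rewrite ler_nat.
  by have := A_ge_base E j; rewrite /base (negbTE jE).
have same : forall i j : 'I_n, (i < j)%N -> (i \in E) = (j \in E) -> Sch E t i < Sch E t j.
  move=> i j ij Eij; have := Sch_mono E t i j ij; rewrite /part Eij eqxx => /(_ isT).
  have := px i; lra.
exists (Sch E t); split; [split|split].
- exact: FS.
- move=> S' FS'; have [y [Py Cy]] := dom S' FS'.
  exact: le_trans (Hx y Py) Cy.
- move=> i j Ei Ej ij; apply: same => //.
  have inE' : forall l, in_earlier p T1 (Sch E t) l -> l \in E.
    move=> l; rewrite /in_earlier /Cmp => h; apply/negPn/negP => lE.
    have := notE l lE; have := px l; lra.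
  by rewrite (inE' _ Ei) (inE' _ Ej).
- move=> i j Li Lj ij; apply: same => //.
  have inL : forall l, in_later p T2 (Sch E t) l -> l \notin E.
    move=> l; rewrite /in_later => h; apply/negP => lE.
    have := HE l lE; lra.
  by rewrite (negbTE (inL _ Li)) (negbTE (inL _ Lj)).
Qed.

End Proof.

Theorem lemma1 (n : nat) (p w : 'I_n -> nat) (T1 T2 k : nat) (mu : rat)
  (hp : forall j, (0 < p j)%N) (hw : forall j, (0 < w j)%N)
  (hwspt : forall i j : 'I_n, (i < j)%N -> (p i * w j <= p j * w i)%N)
  (hT : (T1 < T2)%N) (hmu : 0 <= mu)
  (j1 : 'I_n) (hj1 : (T1 < C_orig p j1)%N)
  (hj1min : forall j : 'I_n, (T1 < C_orig p j)%N -> (j1 <= j)%N)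
  (hpmin : (pmin p <= T1)%N) (hP : (T1 < Ptot p)%N)
  (hk : (T2 - S_orig p j1 <= k)%N)
  (hfeas : exists S, feasible p T1 T2 k S) :
  exists Sopt : 'I_n -> rat,
    optimal p w T1 T2 k mu Sopt /\
    index_ordered (in_earlier p T1 Sopt) Sopt /\
    index_ordered (in_later p T2 Sopt) Sopt.
Proof.

exact: (main _ _ _ _ _ _ _ hp hwspt hT hmu hfeas).
Qed.
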